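(* Let $Q$ be a quiver with a contravariant involution $\sigma$. The category $\mathsf{Rep}_{\mathbb{F}_1}(Q)$, with the duality $(P,\Theta)$ described below, is combinatorial, has the finite direct decomposition property and satisfies the Reduction Assumption.
   Context: $\mathsf{Vect}_{\mathbb{F}_1}$: objects are finite pointed sets (basepoint $*$); morphisms are basepoint preserving maps $f:V\to W$ whose restriction to $V\setminus f^{-1}( * )$ is injective. Inflations are injective morphisms, deflations are surjective morphisms for which the preimage of each non-basepoint is a singleton; zero object $\{*\}$. The cokernel $V/U$ of $U\rightarrowtail V$ collapses $U$ to $*$. Coproduct $V\oplus V'$ is the wedge (disjoint union with basepoints identified). Duality $V^\vee=\mathrm{Hom}(V,\{*,1\})$, identified with $V$ via $v\mapsto\delta_v$, so $(-)^\vee$ squares to the identity. $\mathsf{Rep}_{\mathbb{F}_1}(Q)$: representations $(U=\bigoplus_{i\in Q_0}U_i,\{u_\alpha\}_{\alpha\in Q_1})$ with $U_i\in\mathsf{Vect}_{\mathbb{F}_1}$, finitely many non-zero, and morphisms $u_\alpha:U_i\to U_j$ for $\alpha:i\to j$; inflations, deflations, coproducts are defined pointwise in $Q_0$. A contravariant involution $\sigma$ consists of involutions of $Q_0$ and $Q_1$ with $\sigma(\alpha):\sigma(j)\to\sigma(i)$ for $\alpha:i\to j$. Duality: $P(U)_i=U^\vee_{\sigma(i)}$, $P(u)_\alpha=u^\vee_{\sigma(\alpha)}$, $P(\{\phi_i\})=\{\phi^\vee_{\sigma(i)}\}$, $\Theta=\mathrm{id}$. A symmetric form is $(N,\psi_N)$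 with $\psi_N:N\to P(N)$ an isomorphism and $P(\psi_N)\Theta_N=\psi_N$; isometries preserve $\psi$. For an inflation $j:U\rightarrowtail N$, $U^\perp$ is a kernel of $P(j)\psi_N$; $j$ is isotropic if $P(j)\psi_Nj=0$ and $U\to U^\perp$ is an inflation. Combinatorial: each inflation $j:U\rightarrowtail X_1\oplus X_2$ equals $(j_1\oplus j_2)\circ f$ for inflations $j_k:U_k\rightarrowtail X_k$ and an isomorphism $f:U\to U_1\oplus U_2$. Finite direct decomposition property: each object $W$ admits only finitely many decompositions $U\oplus V\simeq W$ up to isomorphism. Reduction Assumption: for each isotropic $U\rightarrowtail N$ with $k:U^\perp\rightarrowtail N$ and $\pi:U^\perp\twoheadrightarrow U^\perp/U=:N/\!\!/U$, there is a symmetric form $\psi_{N/\!\!/U}$, unique up to isometry, with $P(k)\psi_Nk=P(\pi)\psi_{N/\!\!/U}\pi$. *)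

(* Defs.v *)
From mathcomp Require Import all_boot.
Set Implicit Arguments. Unset Strict Implicit. Unset Printing Implicit Defensive.

(* A finite pointed set (object of Vect_F1) with basepoint * is modelled as  *)
(* [option A] for a finType A (None = basepoint).  A basepoint-preserving map        *)
(* option A -> option B is the same as a map f : A -> option B; it is a      *)
(* morphism of Vect_F1 iff it is injective off f^-1(basepoint).                      *)
(* A representation U = (+)_{i in Q0} U_i is modelled by the wedge of the    *)
(* U_i : one finite type rT of non-basepoint elements graded by deg : rT->Q0 *)
(* (U_i = elements of degree i, so only finitely many U_i are non-zero),     *)
(* together with the maps u_alpha, extended by basepoint outside U_{source alpha}.   *)

Record quiver := Quiver {
  Q0 : Type; Q1 : Type; qsrc : Q1 -> Q0; qtgt : Q1 -> Q0 }.

Record cinvol (Q : quiver) := CInvol {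
  s0 : Q0 Q -> Q0 Q;
  s1 : Q1 Q -> Q1 Q;
  s0K : involutive s0;
  s1K : involutive s1;
  src_s1 : forall a, qsrc (s1 a) = s0 (qtgt a);
  tgt_s1 : forall a, qtgt (s1 a) = s0 (qsrc a) }.

Record rep (Q : quiver) := Rep {
  rT :> finType;
  deg : rT -> Q0 Q;
  arr : Q1 Q -> rT -> option rT;
  arr_deg : forall a x y, arr a x = Some y -> deg x = qsrc a /\ deg y = qtgt a;
  arr_inj : forall a x x' y, arr a x = Some y -> arr a x' = Some y -> x = x' }.

Arguments arr {Q} r a x : rename.
Arguments deg {Q r} x : rename.

Section Rep.
Variable Q : quiver.
Implicit Types U V W : rep Q.

Definition comp (A B C : Type) (g : B -> option C) (f : A -> option B) : A -> option C :=
  fun x => obind g (f x).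

Definition zero_mor (A B : Type) : A -> option B := fun _ => None.
Arguments zero_mor {A B} _.

Definition is_morph U V (f : U -> option V) : Prop :=
  [/\ forall x y, f x = Some y -> deg y = deg x,
      forall x x' y, f x = Some y -> f x' = Some y -> x = x' &
      forall a x, comp f (arr U a) x = comp (arr V a) f x].

(* inflations: (pointwise) injective morphisms of pointed sets *)
Definition inflation U V (f : U -> option V) : Prop :=
  is_morph f /\ forall x, exists y, f x = Some y.

Definition deflation U V (f : U -> option V) : Prop :=
  is_morph f /\ forall y, exists! x, f x = Some y.

Definition is_iso U V (f : U -> option V) : Prop :=
  is_morph f /\ exists g : V -> option U,
    [/\ is_morph g, forall x, comp g f x = Some x & forall y, comp f g y = Some y].

Definition isomorphic U V : Prop := exists f : U -> option V, is_iso f.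

Definition sum_arr U V (a : Q1 Q) (z : (U + V)%type) : option (U + V)%type :=
  match z with
  | inl x => omap inl (arr U a x)
  | inr y => omap inr (arr V a y)
  end.

Definition sum_deg U V (z : (U + V)%type) : Q0 Q :=
  match z with inl x => deg x | inr y => deg y end.

Lemma sum_arr_deg U V a x y : sum_arr a x = Some y ->
  @sum_deg U V x = qsrc a /\ sum_deg y = qtgt a.
Proof.
case: x => [x|x] /=; case E: (arr _ a x) => [z|] //= [<-] /=;
  exact: arr_deg E.
Qed.

Lemma sum_arr_inj U V a x x' y :
  @sum_arr U V a x = Some y -> sum_arr a x' = Some y -> x = x'.
Proof.
case: x => [x|x]; case: x' => [x'|x'] /=;
  case E: (arr _ a x) => [z|] //=; case E': (arr _ a x') => [z'|] //= <- [] //;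
  move=> Hz; subst; by rewrite (arr_inj E E').
Qed.

Definition dsum U V : rep Q :=
  @Rep Q (U + V)%type (@sum_deg U V) (@sum_arr U V)
       (@sum_arr_deg U V) (@sum_arr_inj U V).

Definition sum_mor U U' V V' (f : U -> option V) (g : U' -> option V')
  : dsum U U' -> option (dsum V V') :=
  fun z => match z with inl x => omap inl (f x) | inr y => omap inr (g y) end.

Definition is_kernel (K N M : rep Q) (k : K -> option N) (f : N -> option M) : Prop :=
  [/\ is_morph k, comp f k =1 @zero_mor _ M &
      forall (T : rep Q) (g : T -> option N), is_morph g ->
        comp f g =1 @zero_mor _ M ->
        exists h : T -> option K, [/\ is_morph h, comp k h =1 g &
           forall h' : T -> option K, is_morph h' -> comp k h' =1 g -> h' =1 h]].

Definition is_cokernel (N C M : rep Q) (p : N -> option C) (f : M -> option N) : Prop :=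
  [/\ is_morph p, comp p f =1 @zero_mor _ C &
      forall (T : rep Q) (g : N -> option T), is_morph g ->
        comp g f =1 @zero_mor _ T ->
        exists h : C -> option T, [/\ is_morph h, comp h p =1 g &
           forall h' : C -> option T, is_morph h' -> comp h' p =1 g -> h' =1 h]].

Definition combinatorial : Prop :=
  forall U X1 X2 (j : U -> option (dsum X1 X2)), inflation j ->
    exists (U1 U2 : rep Q) (j1 : U1 -> option X1) (j2 : U2 -> option X2)
           (f : U -> option (dsum U1 U2)),
      [/\ inflation j1, inflation j2, is_iso f & j =1 comp (sum_mor j1 j2) f].

Definition finite_direct_decomposition : Prop :=
  forall W, exists (n : nat) (D : 'I_n -> rep Q * rep Q),
    forall U V, isomorphic (dsum U V) W ->
      exists k, isomorphic U (D k).1 /\ isomorphic V (D k).2.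

End Rep.

(* Duality.  V^vee = Hom(V,{*,1}) is identified with V via v |-> delta_v;   *)
(* under this identification the dual f^vee : W -> V of f : V -> W sends w   *)
(* to the v with delta_w o f = delta_v, i.e. the (unique) v with f v = w,    *)
(* and to the basepoint if there is none.                                                *)
Definition dualf (A B : finType) (f : A -> option B) : B -> option A :=
  fun y => [pick x | f x == Some y].

Lemma dualfP (A B : finType) (f : A -> option B) y x :
  dualf f y = Some x -> f x = Some y.
Proof. by rewrite /dualf; case: pickP => // z /eqP Hz [<-]. Qed.

Section Duality.
Variables (Q : quiver) (sg : cinvol Q).

Definition Pdeg (U : rep Q) (x : U) : Q0 Q := s0 sg (deg x).
Definition Parr (U : rep Q) (a : Q1 Q) : U -> option U := dualf (arr U (s1 sg a)).

Lemma Parr_deg U a x y : Parr a x = Some y -> Pdeg x = qsrc a /\ @Pdeg U y = qtgt a.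
Proof.
move=> /dualfP /arr_deg [Hy Hx]; rewrite /Pdeg Hx Hy src_s1 tgt_s1.
by rewrite !(s0K sg).
Qed.

Lemma Parr_inj U a x x' y : @Parr U a x = Some y -> Parr a x' = Some y -> x = x'.
Proof. move=> /dualfP H1 /dualfP; rewrite H1; by case. Qed.

(* P(U)_i = U^vee_{sigma i},  P(u)_alpha = u^vee_{sigma alpha} *)
Definition Pobj (U : rep Q) : rep Q :=
  @Rep Q (rT U) (@Pdeg U) (@Parr U) (@Parr_deg U) (@Parr_inj U).

Definition Pmor (U V : rep Q) (f : U -> option V) : Pobj V -> option (Pobj U) :=
  dualf f.

Definition Theta (U : rep Q) : U -> option (Pobj (Pobj U)) := fun x => Some x.

Definition symmetric_form (N : rep Q) (psi : N -> option (Pobj N)) : Prop :=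
  is_iso (V := Pobj N) psi /\ comp (Pmor psi) (@Theta N) =1 psi.

Definition isometric (N : rep Q) (psi1 psi2 : N -> option (Pobj N)) : Prop :=
  exists phi : N -> option N,
    is_iso phi /\ comp (comp (Pmor phi) psi2) phi =1 psi1.

Definition reduction_assumption : Prop :=
  forall (N : rep Q) (psiN : N -> option (Pobj N)), symmetric_form psiN ->
  forall (U : rep Q) (j : U -> option N), inflation j ->
    comp (comp (Pmor j) psiN) j =1 @zero_mor _ (Pobj U) ->
  forall (Up : rep Q) (k : Up -> option N),
    is_kernel k (comp (Pmor j) psiN) ->
  forall i : U -> option Up, is_morph i -> comp k i =1 j -> inflation i ->
  forall (C : rep Q) (pi : Up -> option C), is_cokernel pi i ->
    exists psiC : C -> option (Pobj C),
      [/\ symmetric_form psiC,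
          comp (comp (Pmor k) psiN) k =1 comp (comp (Pmor pi) psiC) pi &
          forall psi' : C -> option (Pobj C), symmetric_form psi' ->
            comp (comp (Pmor k) psiN) k =1 comp (comp (Pmor pi) psi') pi ->
            isometric psiC psi'].

End Duality.

(* Main.v *)
From Pilot Require Import Defs.
From mathcomp Require Import all_boot.
Set Implicit Arguments. Unset Strict Implicit. Unset Printing Implicit Defensive.
Local Notation dcomp := Pilot.Defs.comp.

Section Gen.
Variable Q : quiver.
Implicit Types A B C U V W : rep Q.

Lemma morph_comp A B C (f : A -> option B) (g : B -> option C) :
  is_morph f -> is_morph g -> is_morph (dcomp g f).
Proof.
case=> fd fi fa [gd gi ga]; split.
- rewrite /dcomp => x z; case E: (f x) => [y|] //= /gd ->; exact: fd E.
- rewrite /dcomp => x x' z; case E: (f x) => [y|] //=; case E': (f x') => [y'|] //= H H'.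
  have Hy := gi _ _ _ H H'; subst y'; exact: fi E E'.
- move=> a x; rewrite /dcomp.
  have := fa a x; rewrite /dcomp.
  case E1: (arr A a x) => [y|] /=; case E2: (f x) => [z|] /= H.
  + rewrite H; have := ga a z; rewrite /dcomp //.
  + by rewrite H.
  + have := ga a z; rewrite /dcomp -H /= => <- //.
  + by [].
Qed.

Lemma morph_id A : is_morph (fun x : A => Some x).
Proof. split => //; [by move=> x y [<-]| by move=> x x' y [->] []| by move=> a x; rewrite /dcomp /=; case: (arr A a x)]. Qed.

Lemma dualf_inj (T1 T2 : finType) (f : T1 -> option T2) x y :
  (forall x x' y, f x = Some y -> f x' = Some y -> x = x') ->
  f x = Some y -> dualf f y = Some x.
Proof.
move=> inj E; rewrite /dualf; case: pickP => [z /eqP Hz|/(_ x)]; last by rewrite E eqxx.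
by rewrite (inj _ _ _ Hz E).
Qed.

Lemma dualf_None (T1 T2 : finType) (f : T1 -> option T2) x y :
  dualf f y = None -> f x = Some y -> False.
Proof. rewrite /dualf; case: pickP => // /(_ x) + _ E; by rewrite E eqxx. Qed.

Lemma dualf_Some (T : finType) (y : T) : dualf (fun x : T => Some x) y = Some y.
Proof. by apply: dualf_inj => // ? ? ? [->] []. Qed.

Lemma iso_bij A B (f : A -> option B) : is_morph f -> (forall x, f x != None) ->
  (forall y, exists x, f x = Some y) -> is_iso f.
Proof.
move=> fm tot sur; split=> //.
have gf : forall x, dcomp (dualf f) f x = Some x.
  move=> x; rewrite /dcomp; case E: (f x) => [y|] /=; last by have := tot x; rewrite E.
  by apply: dualf_inj E; case: fm.
have fg : forall y, dcomp f (dualf f) y = Some y.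
  move=> y; rewrite /dcomp; case: (sur y) => x Hx; rewrite (dualf_inj _ Hx) //; by case: fm.
exists (dualf f); split => //.
case: fm => fd fi fa; split.
- move=> y x H; have := fd _ _ (dualfP H); done.
- by move=> y y' x /dualfP H /dualfP; rewrite H => -[].
- move=> a y; rewrite /dcomp; case: (sur y) => x Hx; rewrite (dualf_inj _ Hx) /=; last by [].
  have := fa a x; rewrite /dcomp Hx /=.
  case E: (arr A a x) => [x1|] /=.
  + by move=> H; rewrite -H; apply: gf.
  + by move=> <-.
Qed.

Lemma iso_props A B (f : A -> option B) : is_iso f ->
  [/\ is_morph f, forall x, f x != None & forall y, exists x, f x = Some y].
Proof.
case=> fm [g [_ gf fg]]; split => //.
- move=> x; have := gf x; rewrite /dcomp; by case: (f x).
- move=> y; have := fg y; rewrite /dcomp; case: (g y) => //= x H; by exists x.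
Qed.

Definition sub_arr A (S : {set A}) (a : Q1 Q) (s : {x : A | x \in S}) : option {x : A | x \in S} :=
  obind insub (arr A a (val s)).

Lemma sub_arrE A (S : {set A}) a s t : @sub_arr A S a s = Some t -> arr A a (val s) = Some (val t).
Proof.
rewrite /sub_arr; case: (arr A a (val s)) => //= y; case: insubP => // u _ <- [<-] //.
Qed.

Lemma sub_arr_deg A (S : {set A}) a x y : @sub_arr A S a x = Some y ->
  deg (val x) = qsrc a /\ deg (val y) = qtgt a.
Proof. move/sub_arrE; exact: arr_deg. Qed.

Lemma sub_arr_inj A (S : {set A}) a x x' y : @sub_arr A S a x = Some y -> sub_arr a x' = Some y -> x = x'.
Proof. move=> /sub_arrE H /sub_arrE H'; apply: val_inj; exact: arr_inj H H'. Qed.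

Definition subrep A (S : {set A}) : rep Q :=
  @Rep Q {x : A | x \in S} (fun x => deg (val x)) (@sub_arr A S)
    (@sub_arr_deg A S) (@sub_arr_inj A S).

End Gen.

Section FDD.
Variable Q : quiver.
Implicit Types A B C U V W : rep Q.

Lemma obind_insub (T : finType) (S : {set T}) (o : option T) (t : {x : T | x \in S}) :
  obind insub o = Some t -> o = Some (val t).
Proof. case: o => //= w; case: insubP => // u _ <- [->] //. Qed.

Definition imset_of A W (h : A -> option W) : {set W} := [set w | [exists x, h x == Some w]].

Lemma sub_iso A W (h : A -> option W) : is_morph h -> (forall x, h x != None) ->
  isomorphic A (subrep (imset_of h)).
Proof.
move=> [hd hi ha] tot.
exists (fun x => obind insub (h x) : option (subrep (imset_of h))).
apply: iso_bij.
- split.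
  + move=> x y /obind_insub E /=; exact: hd E.
  + move=> x x' y /obind_insub E /obind_insub E'; exact: hi E E'.
  + move=> a x; rewrite /dcomp; have := ha a x; rewrite /dcomp => H.
    case E: (h x) => [w|] /=; last by have := tot x; rewrite E.
    have wS : w \in imset_of h by rewrite inE; apply/existsP; exists x; rewrite E.
    rewrite insubT /= /sub_arr /=; rewrite E /= in H; rewrite -H.
    by case: (arr A a x).
- move=> x /=; case E: (h x) => [w|] /=; last by have := tot x; rewrite E.
  have wS : w \in imset_of h by rewrite inE; apply/existsP; exists x; rewrite E.
  by rewrite insubT.
- move=> t; have := valP t; rewrite inE => /existsP [x /eqP Hx]; exists x.
  by rewrite Hx /= valK.
Qed.

Definition inl_m U V (x : U) : option (dsum U V) := Some (inl x).
Definition inr_m U V (x : V) : option (dsum U V) := Some (inr x).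

Lemma inl_morph U V : is_morph (@inl_m U V).
Proof.
split.
- by move=> x y [<-].
- by move=> x x' y [<-] [].
- by move=> a x; rewrite /dcomp /inl_m /=; case: (arr U a x).
Qed.

Lemma inr_morph U V : is_morph (@inr_m U V).
Proof.
split.
- by move=> x y [<-].
- by move=> x x' y [<-] [].
- by move=> a x; rewrite /dcomp /inr_m /=; case: (arr V a x).
Qed.

Lemma fdd : finite_direct_decomposition Q.
Proof.
move=> W; exists #|{: {set W}}|.
exists (fun k => (subrep (enum_val k), subrep (~: enum_val k))).
move=> U V [f /iso_props [fm tot sur]].
set S := imset_of (dcomp f (@inl_m U V)).
exists (enum_rank S); rewrite /= enum_rankK; split.
- apply: sub_iso; first exact: morph_comp (inl_morph U V) fm.
  by move=> x; rewrite /dcomp /=.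
- have -> : ~: S = imset_of (dcomp f (@inr_m U V)).
    apply/setP => w; rewrite !inE.
    case: (sur w) => z Hz.
    case: z Hz => [u|v] Hz.
    + have -> : [exists x, dcomp f (@inl_m U V) x == Some w].
        by apply/existsP; exists u; rewrite /dcomp /= Hz.
      apply/esym/negbTE/existsP => -[v /eqP]; rewrite /dcomp /= => Hv.
      case: fm => _ fi _; by have := fi _ _ _ Hz Hv.
    + have -> : [exists x, dcomp f (@inr_m U V) x == Some w].
        by apply/existsP; exists v; rewrite /dcomp /= Hz.
      apply/negP => /existsP [u /eqP]; rewrite /dcomp /= => Hu.
      case: fm => _ fi _; by have := fi _ _ _ Hz Hu.
  apply: sub_iso; first exact: morph_comp (inr_morph U V) fm.
  by move=> x; rewrite /dcomp /=.
Qed.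

End FDD.

Section Comb.
Variable Q : quiver.
Implicit Types A B C U V W : rep Q.

Definition isl (T1 T2 : Type) (z : option (T1 + T2)) : bool :=
  if z is Some (inl _) then true else false.
Definition isr (T1 T2 : Type) (z : option (T1 + T2)) : bool :=
  if z is Some (inr _) then true else false.

Lemma comb : combinatorial Q.
Proof.
move=> U X1 X2 j [[jd ji ja] jt].
pose S1 := [set x | isl (j x)]; pose S2 := [set x | isr (j x)].
have S1P : forall x, x \in S1 -> exists y, j x = Some (inl y).
  by move=> x; rewrite inE; case: (j x) => // -[y|y] // _; exists y.
have S2P : forall x, x \in S2 -> exists y, j x = Some (inr y).
  by move=> x; rewrite inE; case: (j x) => // -[y|y] // _; exists y.
have S12 : forall x, (x \in S1) || (x \in S2).
  by move=> x; rewrite !inE; case: (jt x) => -[y|y] ->.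
have S1n2 : forall x, x \in S1 -> x \notin S2.
  by move=> x; rewrite !inE; case: (j x) => // -[].
have cl1 : forall a x x', x \in S1 -> arr U a x = Some x' -> x' \in S1.
  move=> a x x' /S1P [y Hy] E; have := ja a x; rewrite /dcomp E Hy /=.
  by move=> H; rewrite inE H; case: (jt x') => z; rewrite H; case: (arr X1 a y).
have cl2 : forall a x x', x \in S2 -> arr U a x = Some x' -> x' \in S2.
  move=> a x x' /S2P [y Hy] E; have := ja a x; rewrite /dcomp E Hy /=.
  by move=> H; rewrite inE H; case: (jt x') => z; rewrite H; case: (arr X2 a y).
pose U1 := subrep S1; pose U2 := subrep S2.
pose j1 := fun s : U1 => match j (val s) with Some (inl y) => Some y | _ => None end.
pose j2 := fun s : U2 => match j (val s) with Some (inr y) => Some y | _ => None end.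
pose f := fun x : U => if x \in S1 then omap inl (insub x : option U1) : option (dsum U1 U2)
                       else omap inr (insub x : option U2).
have f1 : forall x, x \in S1 -> f x = omap inl (insub x : option U1).
  by move=> x Hx; rewrite /f Hx.
have f2 : forall x, x \in S2 -> f x = omap inr (insub x : option U2).
  by move=> x Hx; rewrite /f (negbTE (contraL (@S1n2 x) _)) ?Hx.
exists U1, U2, j1, j2, f; split.
- split; last first.
    move=> s; case: (S1P _ (valP s)) => y Hy; exists y; by rewrite /j1 Hy.
  split.
  + move=> s y; rewrite /j1; case E: (j (val s)) => [[y'|y']|] // [<-].
    exact: jd E.
  + move=> s s' y; rewrite /j1; case E: (j (val s)) => [[z|z]|] // [<-].
    case E': (j (val s')) => [[z'|z']|] // [Hz]; subst z'.
    by apply: val_inj; apply: ji E E'.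
  + move=> a s; rewrite /dcomp /= /sub_arr.
    case: (S1P _ (valP s)) => y Hy.
    have := ja a (val s); rewrite /dcomp Hy /=.
    have -> : j1 s = Some y by rewrite /j1 Hy.
    case E: (arr U a (val s)) => [x'|] /=; last by case: (arr X1 a y).
    have x'S : x' \in S1 by apply: cl1 E; exact: valP.
    rewrite insubT /j1 /= => ->; by case: (arr X1 a y).
- split; last first.
    move=> s; case: (S2P _ (valP s)) => y Hy; exists y; by rewrite /j2 Hy.
  split.
  + move=> s y; rewrite /j2; case E: (j (val s)) => [[y'|y']|] // [<-].
    exact: jd E.
  + move=> s s' y; rewrite /j2; case E: (j (val s)) => [[z|z]|] // [<-].
    case E': (j (val s')) => [[z'|z']|] // [Hz]; subst z'.
    by apply: val_inj; apply: ji E E'.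
  + move=> a s; rewrite /dcomp /= /sub_arr.
    case: (S2P _ (valP s)) => y Hy.
    have := ja a (val s); rewrite /dcomp Hy /=.
    have -> : j2 s = Some y by rewrite /j2 Hy.
    case E: (arr U a (val s)) => [x'|] /=; last by case: (arr X2 a y).
    have x'S : x' \in S2 by apply: cl2 E; exact: valP.
    rewrite insubT /j2 /= => ->; by case: (arr X2 a y).
- apply: iso_bij.
  + split.
    * move=> x z; case/orP: (S12 x) => Hx; [rewrite f1 //|rewrite f2 //];
        case: insubP => // s _ <- [<-] //.
    * move=> x x' z; case/orP: (S12 x) => Hx; [rewrite f1 //|rewrite f2 //];
        case: insubP => // s _ <- [<-];
        (case/orP: (S12 x') => Hx'; [rewrite f1 //|rewrite f2 //]);
        case: insubP => // s' _ <- [] // -> //.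
    * move=> a x; rewrite /dcomp.
      case/orP: (S12 x) => Hx.
      - rewrite f1 // insubT /= /sub_arr /=.
        case E: (arr U a x) => [x'|] //=.
        have x'S : x' \in S1 by apply: cl1 E.
        by rewrite f1 // insubT.
      - rewrite f2 // insubT /= /sub_arr /=.
        case E: (arr U a x) => [x'|] //=.
        have x'S : x' \in S2 by apply: cl2 E.
        by rewrite f2 // insubT.
  + move=> x; case/orP: (S12 x) => Hx; [rewrite f1 //|rewrite f2 //]; by rewrite insubT.
  + move=> [s|s]; exists (val s).
    * by rewrite f1 ?valK //; exact: valP.
    * by rewrite f2 ?valK //; exact: valP.
- move=> x; rewrite /dcomp.
  case/orP: (S12 x) => Hx.
  + rewrite f1 // insubT /= /j1 /=; case: (S1P _ Hx) => y ->; done.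
  + rewrite f2 // insubT /= /j2 /=; case: (S2P _ Hx) => y ->; done.
Qed.

End Comb.

Section Red.
Variables (Q : quiver) (sg : cinvol Q).
Implicit Types A B C U V W N : rep Q.

Lemma opt_eq (T : Type) (o1 o2 : option T) :
  (forall w, o1 = Some w -> o2 = Some w) -> (forall w, o2 = Some w -> o1 = Some w) -> o1 = o2.
Proof.
case: o1 => [w1|] H1 H2; first by rewrite (H1 w1).
by case: o2 H1 H2 => // w2 _ /(_ w2 erefl).
Qed.

Lemma morph_P U V (f : U -> option V) : is_morph f -> is_morph (Pmor (sg:=sg) f).
Proof.
move=> [fd fi fa]; split.
- move=> y x /dualfP /fd; rewrite /= /Pdeg => ->; done.
- by move=> y y' x /dualfP H /dualfP; rewrite H => -[].
- move=> a y; rewrite /dcomp /= /Parr /Pmor; apply: opt_eq => w.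
  + case E1: (dualf (arr V (s1 sg a)) y) => [z|] //= /dualfP Hw.
    move/dualfP: E1 => E1.
    have := fa (s1 sg a) w; rewrite /dcomp Hw /= E1.
    case E: (arr U (s1 sg a) w) => [x'|] //= Hx'.
    rewrite (dualf_inj fi Hx') /=; exact: dualf_inj (@arr_inj _ _ _) E.
  + case E1: (dualf f y) => [x'|] //= /dualfP Hw.
    move/dualfP: E1 => E1.
    have := fa (s1 sg a) w; rewrite /dcomp Hw /=.
    case E: (f w) => [z|] /= Hz; rewrite E1 in Hz; last by [].
    rewrite (dualf_inj (@arr_inj _ _ _) (esym Hz)) /=; exact: dualf_inj fi E.
Qed.

Lemma sym_inv N (psi : N -> option (Pobj sg N)) : symmetric_form psi ->
  forall x, exists y, psi x = Some y /\ psi y = Some x.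
Proof.
move=> [/iso_props [_ tot _] Hs] x.
case E: (psi x) => [y|]; last by have := tot x; rewrite E.
exists y; split => //; apply: dualfP; have := Hs x; rewrite /dcomp /Theta /= E; done.
Qed.

Definition res_arr N (P : pred N) a x := if P x then arr N a x else None.
Lemma res_arr_deg N (P : pred N) a x y : res_arr P a x = Some y -> deg x = qsrc a /\ deg y = qtgt a.
Proof. rewrite /res_arr; case: (P x) => //; exact: arr_deg. Qed.
Lemma res_arr_inj N (P : pred N) a x x' y : res_arr P a x = Some y -> res_arr P a x' = Some y -> x = x'.
Proof. rewrite /res_arr; case: (P x) => //; case: (P x') => //; exact: arr_inj. Qed.
Definition resT N (P : pred N) : rep Q :=
  @Rep Q N (@deg Q N) (@res_arr N P) (@res_arr_deg N P) (@res_arr_inj N P).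

Definition fil_arr N (P : pred N) a x :=
  obind (fun y => if P y then Some y else None) (arr N a x).
Lemma fil_arr_deg N (P : pred N) a x y : fil_arr P a x = Some y -> deg x = qsrc a /\ deg y = qtgt a.
Proof. rewrite /fil_arr; case E: (arr N a x) => [z|] //=; case: (P z) => // -[<-]; exact: arr_deg E. Qed.
Lemma fil_arr_inj N (P : pred N) a x x' y : fil_arr P a x = Some y -> fil_arr P a x' = Some y -> x = x'.
Proof.
rewrite /fil_arr; case E: (arr N a x) => [z|] //=; case: (P z) => // -[<-].
case E': (arr N a x') => [z'|] //=; case: (P z') => // -[Hz]; subst z'; exact: arr_inj E E'.
Qed.
Definition filT N (P : pred N) : rep Q :=
  @Rep Q N (@deg Q N) (@fil_arr N P) (@fil_arr_deg N P) (@fil_arr_inj N P).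

End Red.

Section Red2.
Variables (Q : quiver) (sg : cinvol Q).
Implicit Types A B C U V W N : rep Q.

Lemma redA : reduction_assumption sg.
Proof.
move=> N psiN Hsym U j [jm jt] Hiso Up k [km kf kU] i im Hki [_ it] C pi [pm pf pU].
have psim : is_morph psiN by case: Hsym => [[]].
have psi_inv := sym_inv Hsym.
pose f := dcomp (Pmor j) psiN.
have fm : is_morph f := morph_comp psim (morph_P sg jm).
have [kd ki ka] := km.
have [pd pi_inj pa] := pm.
have [jd ji ja] := jm.
have [fd fi fa] := fm.
pose P := fun x : N => f x == None.
pose T := resT P.
pose g : T -> option N := fun x => if P x then Some x else None.
have gm : is_morph g.
  split.
  - by move=> x y; rewrite /g; case: (P x) => // -[<-].
  - by move=> x x' y; rewrite /g; case: (P x) => // -[<-]; case: (P x') => // -[].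
  - move=> a x; rewrite /dcomp /g /= /res_arr.
    case Px: (P x) => //=.
    case E: (arr N a x) => [y|] //=.
    have : P y.
      have := fa a x; rewrite /dcomp E /=.
      move: Px; rewrite /P => /eqP -> /=; move=> ->; done.
    by move=> ->.
have gf0 : dcomp f g =1 zero_mor (Pobj sg U).
  move=> x; rewrite /dcomp /g; case Px: (P x) => //=.
  by move: Px => /eqP.
have [h [hm hk _]] := kU T g gm gf0.
have kf' : forall x z, k x = Some z -> f z = None.
  by move=> x z E; have := kf x; rewrite /dcomp E.
have kTm : is_morph (k : Up -> option T).
  split.
  - exact: kd.
  - exact: ki.
  - move=> a x; have := ka a x; rewrite /dcomp => ->.
    case E: (k x) => [z|] //=.
    by rewrite /res_arr /P (kf' _ _ E) eqxx.
have ktot : forall x, exists z, k x = Some z.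
  move=> x.
  have [h0 [_ _ hu0]] := kU Up k km kf.
  have e1 := hu0 _ (morph_comp kTm hm).
  have e2 := hu0 _ (morph_id Up).
  have H1 : dcomp k (dcomp h (k : Up -> option T)) =1 k.
    move=> y; rewrite /dcomp; case E: (k y) => [z|] //=.
    have := hk z; rewrite /dcomp /g /P (kf' _ _ E) eqxx => //.
  have H2 : dcomp k (fun y : Up => Some y) =1 k by [].
  have := e1 H1 x; rewrite -(e2 H2 x) /dcomp.
  case: (k x) => [z|] //; by exists z.
have kimg : forall z, f z = None -> exists x, k x = Some z.
  move=> z Hz; have := hk z; rewrite /dcomp /g /P Hz eqxx.
  case: (h z) => [x|] //= Hx; by exists x.
clear h hm hk.
pose R := fun x : Up => [forall u, i u != Some x].
pose T2 := filT R.
pose g2 : Up -> option T2 := fun x => if R x then Some x else None.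
have notR : forall x, ~~ R x -> exists u, i u = Some x.
  by move=> x /forallPn [u /negPn /eqP Hu]; exists u.
have [id_ ii ia] := im.
have g2m : is_morph g2.
  split.
  - by move=> x y; rewrite /g2; case: (R x) => // -[<-].
  - by move=> x x' y; rewrite /g2; case: (R x) => // -[<-]; case: (R x') => // -[].
  - move=> a x; rewrite /dcomp /g2 /=.
    case Rx: (R x) => //=.
    case/notR: (negbT Rx) => u Hu.
    have := ia a u; rewrite /dcomp Hu /= => <-.
    case E: (arr U a u) => [u'|] //=.
    case E': (i u') => [y|] //=.
    have : ~~ R y by apply/forallPn; exists u'; rewrite E' eqxx.
    by move/negbTE => ->.
have g2i : dcomp g2 i =1 zero_mor T2.
  move=> u; rewrite /dcomp /g2; case E: (i u) => [x|] //=.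
  have : ~~ R x by apply/forallPn; exists u; rewrite E eqxx.
  by move/negbTE => ->.
have [h [hm hp _]] := pU T2 g2 g2m g2i.
have pnR : forall x, ~~ R x -> pi x = None.
  by move=> x /notR [u Hu]; have := pf u; rewrite /dcomp Hu.
have pR : forall x, R x -> pi x != None.
  move=> x Rx; have := hp x; rewrite /dcomp /g2 Rx; by case: (pi x).
have piTm : is_morph (pi : T2 -> option C).
  split.
  - exact: pd.
  - exact: pi_inj.
  - move=> a x; have := pa a x; rewrite /dcomp /= /fil_arr => <-.
    case E: (arr Up a x) => [y|] //=.
    case Ry: (R y) => //=.
    by rewrite pnR ?Ry.
have psurj : forall c, exists x, pi x = Some c.
  move=> c.
  have [h0 [_ _ hu0]] := pU C pi pm pf.
  have e1 := hu0 _ (morph_comp hm piTm).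
  have e2 := hu0 _ (morph_id C).
  have H1 : dcomp (dcomp (pi : T2 -> option C) h) pi =1 pi.
    move=> y; rewrite /dcomp; case E: (pi y) => [c'|] //=.
    have := hp y; rewrite /dcomp E /= => ->; rewrite /g2.
    case Ry: (R y) => //=.
    by rewrite pnR ?Ry in E.
  have H2 : dcomp (fun y : C => Some y) pi =1 pi by move=> y; rewrite /dcomp; case: (pi y).
  have := e1 H1 c; rewrite -(e2 H2 c) /dcomp.
  case: (h c) => [x|] //= Hx; by exists x.
clear h hm hp.
pose M := dcomp (dcomp (Pmor k) psiN) k.
have Mm : is_morph M := morph_comp km (morph_comp psim (morph_P sg km)).
have [Md Mi Ma] := Mm.
have M1a : forall x, pi x = None -> M x = None.
  move=> x Hx.
  case Rx: (R x); first by have := pR x Rx; rewrite Hx.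
  case/notR: (negbT Rx) => u Hu.
  have := Hki u; rewrite /dcomp Hu /= => Hkx.
  case: (jt u) => z Hz.
  case: (psi_inv z) => z' [E1 E2].
  rewrite /M /dcomp Hkx Hz /= E1 /=.
  case E: (dualf k z') => [y|] //; exfalso.
  have := kf' _ _ (dualfP E); rewrite /f /dcomp E2 /=.
  by rewrite /Pmor (dualf_inj ji Hz).
have M1b : forall x c, pi x = Some c -> exists y, M x = Some y.
  move=> x c Hx.
  have Rx : R x by apply/negPn/negP => /pnR; rewrite Hx.
  case: (ktot x) => z Hz.
  case: (psi_inv z) => z' [E1 E2].
  have : f z' = None.
    rewrite /f /dcomp E2 /=.
    case E: (dualf j z) => [u|] //.
    move/dualfP: E => E.
    case: (it u) => x' Hx'.
    have := Hki u; rewrite /dcomp Hx' /= E => Hk'.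
    have ex := ki _ _ _ Hk' Hz; subst x'.
    by move: Rx => /forallP /(_ u); rewrite Hx' eqxx.
  case/kimg => y Hy.
  exists y; rewrite /M /dcomp Hz /= E1 /=; exact: dualf_inj ki Hy.
have M2 : forall x y, M x = Some y -> M y = Some x.
  move=> x y; rewrite /M /dcomp.
  case Hz: (k x) => [z|] //=.
  case: (psi_inv z) => z' [E1 E2]; rewrite E1 /= => /dualfP Hy.
  rewrite Hy /= E2 /=; exact: dualf_inj ki Hz.
have M1c : forall x y, M x = Some y -> pi x != None.
  move=> x y Hm; apply/negP => /eqP /M1a; by rewrite Hm.
pose psiC : C -> option (Pobj sg C) := fun c => obind (fun x => obind pi (M x)) (dualf pi c).
have P1 : forall x c, pi x = Some c -> psiC c = obind pi (M x).
  by move=> x c Hx; rewrite /psiC (dualf_inj pi_inj Hx).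
have spec : forall c, exists x y cy, [/\ pi x = Some c, M x = Some y, pi y = Some cy & psiC c = Some cy].
  move=> c; case: (psurj c) => x Hx; case: (M1b _ _ Hx) => y Hy.
  case Ey: (pi y) => [cy|]; last by have := M1c _ _ (M2 _ _ Hy); rewrite Ey.
  exists x, y, cy; split => //; by rewrite (P1 _ _ Hx) Hy /= Ey.
have P2 : forall c c', psiC c = Some c' -> psiC c' = Some c.
  move=> c c'; case: (spec c) => x [y [cy [Hx Hy Ecy ->]]] [<-].
  by rewrite (P1 _ _ Ecy) (M2 _ _ Hy) /= Hx.
have Z : forall b y cy, pi y = Some cy -> dualf (arr Up b) y = None -> dualf (arr C b) cy = None.
  move=> b y cy Hy Hn.
  case E: (dualf (arr C b) cy) => [c2|] //.
  move/dualfP: E => E.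
  case: (psurj c2) => x2 Hx2.
  have := pa b x2; rewrite /dcomp Hx2 /= E.
  case E2: (arr Up b x2) => [y2|] //= Hy2.
  have ey := pi_inj _ _ _ Hy2 Hy; subst y2.
  by case: (dualf_None Hn E2).
have psiCm : is_morph psiC.
  split.
  - move=> c c'; case: (spec c) => x [y [cy [Hx Hy Ecy ->]]] [<-].
    have := Md _ _ Hy; rewrite /= /Pdeg => H; rewrite (pd _ _ Ecy) (pd _ _ Hx); exact: H.
  - move=> c1 c2 c' /P2 H1 /P2; by rewrite H1 => -[].
  - move=> a c; case: (spec c) => x [y [cy [Hx Hy Ecy Hc]]].
    rewrite /dcomp Hc /= /Parr.
    have HA := pa a x; rewrite /dcomp Hx /= in HA.
    have HM := Ma a x; rewrite /dcomp Hy /= /Parr in HM.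
    case E: (arr Up a x) => [x1|]; rewrite E /= in HA HM; last first.
      by rewrite -HA /=; apply/esym/(Z _ _ _ Ecy); rewrite -HM.
    rewrite -HA.
    case E1: (pi x1) => [c1|] /=; last first.
      by apply/esym/(Z _ _ _ Ecy); rewrite -HM; apply: M1a.
    rewrite (P1 _ _ E1).
    case E2: (M x1) => [x1'|]; last by case: (M1b _ _ E1); rewrite E2.
    rewrite E2 in HM.
    move/esym/dualfP: HM => HM.
    have := M1c _ _ (M2 _ _ E2).
    case E3: (pi x1') => [c1'|] //= _.
    rewrite E3; apply/esym; apply: dualf_inj; first exact: (@arr_inj _ _ _).
    have := pa (s1 sg a) x1'; rewrite /dcomp HM E3 /= => <-; done.
have psiCiso : is_iso (V := Pobj sg C) psiC.
  apply: iso_bij => //.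
  - by move=> c; case: (spec c) => x [y [cy [_ _ _ ->]]].
  - move=> c; case: (spec c) => x [y [cy [_ _ _ Hc]]]; exists cy; exact: P2.
have psiCsym : symmetric_form psiC.
  split => // c; rewrite /dcomp /Theta /= /Pmor.
  case: (spec c) => x [y [cy [_ _ _ Hc]]]; rewrite Hc.
  apply: dualf_inj (P2 _ _ Hc); by case: psiCm.
have Meq : M =1 dcomp (dcomp (Pmor pi) psiC) pi.
  move=> x; rewrite /dcomp.
  case Hx: (pi x) => [c|] /=; last exact: M1a.
  rewrite (P1 _ _ Hx).
  case: (M1b _ _ Hx) => y Hy; rewrite Hy /=.
  case Ey: (pi y) => [cy|] /=; last by have := M1c _ _ (M2 _ _ Hy); rewrite Ey.
  by rewrite /Pmor (dualf_inj pi_inj Ey).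
exists psiC; split => //.
move=> psi' Hs' Heq.
exists (fun x => Some x); split.
  apply: iso_bij => //; first exact: morph_id.
  by move=> y; exists y.
move=> c; rewrite /dcomp /= /Pmor.
case: (spec c) => x [y [cy [Hx Hy Ecy Hc]]]; rewrite Hc.
case: (sym_inv Hs' c) => d [Hd _]; rewrite Hd /= dualf_Some.
have := Heq x; rewrite -/M Hy /dcomp Hx /= Hd /= /Pmor => /esym /dualfP Hd'.
by rewrite -Hd' -Ecy.
Qed.

End Red2.

Theorem lemma1p8 (Q : quiver) (sg : cinvol Q) :
  [/\ combinatorial Q, finite_direct_decomposition Q & reduction_assumption sg].
Proof. split; [exact: comb | exact: fdd | exact: redA]. Qed.
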